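(* Let $(M,\circ,\mathrm{OR})$ be a free $\mathbb{D}$-module of rank 3 with scalar product and orientation, and let $z_1,z_2,z_3\in M\setminus\epsilon M$ be sliding vectors (zero pitch) with parallel axes. Then $z_1,z_2,z_3$ are $\mathbb{R}$-linearly dependent if and only if their axes are coplanar.
   Context: $\mathbb{D}=\{a+\epsilon b: a,b\in\mathbb{R}\}$, $\epsilon^2=0$. Scalar product: symmetric $\mathbb{D}$-bilinear $\circ:M\times M\to\mathbb{D}$ with $\mathfrak{Re}(x\circ x)\ge0$, equality iff $x\in\epsilon M$; orientation: one of the two classes of ordered bases under $\{b'_j=A_{jk}b_k\}\sim\{b_k\}$ iff $\det\mathfrak{Re}(A)>0$. $V=M/\epsilon M$, $\pi$ the quotient map. $E$ is the set of real 3-dimensional subspaces $P\subset M$ with $\mathfrak{Du}(x\circ y)=0$ for $x,y\in P$ and $P\cap\epsilon M=\{0\}$, a Euclidean affine space over $V$ (with $B-A:=d^ke_k$ where $e^B_i=e^A_i+\epsilon\,\epsilon_{ijk}d^ke^A_j$, $\{e_i\}$ positive orthonormal in $V$, $e^P_i\in P$ its lift). Each $z\in M\setminus\epsilon M$ is uniquely $z=(a+\epsilon b)u$ with $a>0$, $b\in\mathbb{R}$, $u\circ u=1$; its pitch is $b/a$ (a sliding vector is one with pitch $0$) and its axis is the line $\{P\in E: u\in P\}$, with direction $\pi(u)$. *)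

(* Defs.v *)
(* Dual numbers D = R + eps R are represented as pairs (Re, Du);
   the free rank-3 D-module M is represented by D^3 = R^3 x R^3, where
   x = (x.1, x.2) stands for x.1 + eps x.2 (componentwise). *)
From HB Require Import structures.
From mathcomp Require Import all_boot all_order all_algebra.
Set Implicit Arguments.
Unset Strict Implicit.
Unset Printing Implicit Defensive.
Import Order.TTheory GRing.Theory Num.Theory.
Local Open Scope ring_scope.

Notation Mod R := ('rV[R]_3 * 'rV[R]_3)%type.

Definition dadd (R : rcfType) (c d : R * R) : R * R := (c.1 + d.1, c.2 + d.2).
Definition dmul (R : rcfType) (c d : R * R) : R * R :=
  (c.1 * d.1, c.1 * d.2 + c.2 * d.1).

(* D-scalar action on M : (c0 + eps c1)(x0 + eps x1) = c0 x0 + eps (c0 x1 + c1 x0) *)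
Definition dscale (R : rcfType) (c : R * R) (x : Mod R) : Mod R :=
  (c.1 *: x.1, c.1 *: x.2 + c.2 *: x.1).

Definition eps (R : rcfType) (x : Mod R) : Mod R := (0, x.1).
Definition in_epsM (R : rcfType) (x : Mod R) : Prop := exists y, x = eps y.

(* quotient map pi : M -> V = M / eps M, with V identified with R^3 *)
Definition proj (R : rcfType) (x : Mod R) : 'rV[R]_3 := x.1.

Definition is_scalar_product (R : rcfType) (sp : Mod R -> Mod R -> R * R) : Prop :=
  (forall (c : R * R) (x y w : Mod R),
      sp (dscale c x + y) w = dadd (dmul c (sp x w)) (sp y w)) /\
  (forall x y, sp x y = sp y x) /\
  (forall x, 0 <= (sp x x).1 /\ ((sp x x).1 = 0 <-> in_epsM x)).

Definition vdot (R : rcfType) (sp : Mod R -> Mod R -> R * R) (a b : 'rV[R]_3) : R :=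
  (sp (a, 0) (b, 0)).1.

Definition levi (R : rcfType) (i j k : 'I_3) : R :=
  \det (\matrix_(r < 3, c < 3) ((c == nth i [:: i; j; k] r)%:R : R)).

(* Orientation: [o = true] means the class of the standard D-basis of D^3 is the
   positive one. A basis e of V is positive iff det of its coordinate matrix
   (rows e_i) has the sign prescribed by o. *)
Definition pos_orthonormal (R : rcfType) (sp : Mod R -> Mod R -> R * R) (o : bool)
    (e : 'I_3 -> 'rV[R]_3) : Prop :=
  (forall i j, vdot sp (e i) (e j) = (i == j)%:R) /\
  (if o then 0 < \det (\matrix_(i < 3, j < 3) e i 0 j)
   else \det (\matrix_(i < 3, j < 3) e i 0 j) < 0).

Definition in_E (R : rcfType) (sp : Mod R -> Mod R -> R * R) (P : {vspace Mod R}) : Prop :=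
  \dim P = 3%N /\
  (forall x y, x \in P -> y \in P -> (sp x y).2 = 0) /\
  (forall x, x \in P -> in_epsM x -> x = 0).

(* Diff A B v  <->  B - A = v  in the affine space E over V *)
Definition Diff (R : rcfType) (sp : Mod R -> Mod R -> R * R) (o : bool)
    (A B : {vspace Mod R}) (v : 'rV[R]_3) : Prop :=
  exists e : 'I_3 -> 'rV[R]_3, pos_orthonormal sp o e /\
  exists d : 'I_3 -> R, v = \sum_(k < 3) d k *: e k /\
  forall eA eB : 'I_3 -> Mod R,
    (forall i, eA i \in A /\ proj (eA i) = e i) ->
    (forall i, eB i \in B /\ proj (eB i) = e i) ->
    forall i, eB i = eA i + eps (\sum_(j < 3) \sum_(k < 3) (levi R i j k * d k) *: eA j).

Definition unit_decomp (R : rcfType) (sp : Mod R -> Mod R -> R * R)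
    (z : Mod R) (a b : R) (u : Mod R) : Prop :=
  0 < a /\ sp u u = (1, 0) /\ z = dscale (a, b) u.

Definition is_sliding (R : rcfType) (sp : Mod R -> Mod R -> R * R) (z : Mod R) : Prop :=
  ~ in_epsM z /\ exists a b u, unit_decomp sp z a b u /\ b / a = 0.

Definition on_axis (R : rcfType) (sp : Mod R -> Mod R -> R * R) (z : Mod R)
    (P : {vspace Mod R}) : Prop :=
  in_E sp P /\ exists a b u, unit_decomp sp z a b u /\ u \in P.

Definition axis_dir (R : rcfType) (sp : Mod R -> Mod R -> R * R) (z : Mod R)
    (w : 'rV[R]_3) : Prop :=
  exists a b u, unit_decomp sp z a b u /\ w = proj u.

Definition parallel_axes (R : rcfType) (sp : Mod R -> Mod R -> R * R) (z1 z2 : Mod R) : Prop :=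
  exists w1 w2, axis_dir sp z1 w1 /\ axis_dir sp z2 w2 /\ (<[w1]> = <[w2]>)%VS.

(* the axes of z1 z2 z3 lie in a common affine plane {A0 + w | w in W} of E *)
Definition coplanar_axes (R : rcfType) (sp : Mod R -> Mod R -> R * R) (o : bool)
    (z1 z2 z3 : Mod R) : Prop :=
  exists (A0 : {vspace Mod R}) (W : {vspace 'rV[R]_3}),
    in_E sp A0 /\ \dim W = 2%N /\
    forall z P, z \in [:: z1; z2; z3] -> on_axis sp z P ->
      exists2 w, w \in W & Diff sp o A0 P w.

(* Main.v *)
Require Import Defs.
From HB Require Import structures.
From mathcomp Require Import all_boot all_order all_algebra.
From mathcomp Require Import ring lra.
From Stdlib Require Import Classical_Prop.
Set Implicit Arguments.
Unset Strict Implicit.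
Unset Printing Implicit Defensive.
Import Order.TTheory GRing.Theory Num.Theory.
Local Open Scope ring_scope.

Definition i0 : 'I_3 := @Ordinal 3 0 isT.
Definition i1 : 'I_3 := @Ordinal 3 1 isT.
Definition i2 : 'I_3 := @Ordinal 3 2 isT.

Lemma sum3 (V : nmodType) (F : 'I_3 -> V) : \sum_(i < 3) F i = F i0 + F i1 + F i2.
Proof.
rewrite !big_ord_recr big_ord0 /= add0r.
by congr (F _ + F _ + F _); apply: val_inj.
Qed.

Lemma ord3P (P : 'I_3 -> Prop) : P i0 -> P i1 -> P i2 -> forall i, P i.
Proof.
move=> h0 h1 h2 [[|[|[|n]]] Hn] //.
- by rewrite (_ : Ordinal Hn = i0) //; apply: val_inj.
- by rewrite (_ : Ordinal Hn = i1) //; apply: val_inj.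
- by rewrite (_ : Ordinal Hn = i2) //; apply: val_inj.
Qed.

Ltac normo x := lazymatch x with
  | i0 => idtac | i1 => idtac | i2 => idtac
  | _ => let v := eval compute in (nat_of_ord x) in
    lazymatch v with
    | 0%N => replace x with i0 by (apply: val_inj; reflexivity)
    | 1%N => replace x with i1 by (apply: val_inj; reflexivity)
    | 2%N => replace x with i2 by (apply: val_inj; reflexivity)
    end
  end.

Lemma det3 (R : comNzRingType) (A : 'M[R]_3) : \det A =
  A i0 i0 * A i1 i1 * A i2 i2 - A i0 i0 * A i1 i2 * A i2 i1
  - A i0 i1 * A i1 i0 * A i2 i2 + A i0 i1 * A i1 i2 * A i2 i0
  + A i0 i2 * A i1 i0 * A i2 i1 - A i0 i2 * A i1 i1 * A i2 i0.
Proof.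
rewrite (expand_det_row _ i0) sum3 /cofactor !(expand_det_row _ ord0) !big_ord_recr !big_ord0 /=.
rewrite /cofactor !det_mx11 !mxE /=.
repeat match goal with |- context [@fun_of_matrix _ _ _ _ ?x ?y] => progress (normo x; normo y) end.
rewrite !add0n !expr0 !expr1 expr2; ring.
Qed.

Definition Cf (R : rcfType) (d : 'I_3 -> R) (i j : 'I_3) : R :=
  \sum_(k < 3) levi R i j k * d k.

Lemma Cf00 (R : rcfType) (d : 'I_3 -> R) : Cf d i0 i0 = 0.
Proof. by rewrite /Cf sum3 /levi !det3 !mxE /=; ring. Qed.
Lemma Cf01 (R : rcfType) (d : 'I_3 -> R) : Cf d i0 i1 = d i2.
Proof. by rewrite /Cf sum3 /levi !det3 !mxE /=; ring. Qed.
Lemma Cf02 (R : rcfType) (d : 'I_3 -> R) : Cf d i0 i2 = - d i1.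
Proof. by rewrite /Cf sum3 /levi !det3 !mxE /=; ring. Qed.
Lemma Cf10 (R : rcfType) (d : 'I_3 -> R) : Cf d i1 i0 = - d i2.
Proof. by rewrite /Cf sum3 /levi !det3 !mxE /=; ring. Qed.
Lemma Cf11 (R : rcfType) (d : 'I_3 -> R) : Cf d i1 i1 = 0.
Proof. by rewrite /Cf sum3 /levi !det3 !mxE /=; ring. Qed.
Lemma Cf12 (R : rcfType) (d : 'I_3 -> R) : Cf d i1 i2 = d i0.
Proof. by rewrite /Cf sum3 /levi !det3 !mxE /=; ring. Qed.
Lemma Cf20 (R : rcfType) (d : 'I_3 -> R) : Cf d i2 i0 = d i1.
Proof. by rewrite /Cf sum3 /levi !det3 !mxE /=; ring. Qed.
Lemma Cf21 (R : rcfType) (d : 'I_3 -> R) : Cf d i2 i1 = - d i0.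
Proof. by rewrite /Cf sum3 /levi !det3 !mxE /=; ring. Qed.
Lemma Cf22 (R : rcfType) (d : 'I_3 -> R) : Cf d i2 i2 = 0.
Proof. by rewrite /Cf sum3 /levi !det3 !mxE /=; ring. Qed.
Definition CfE := (Cf00, Cf01, Cf02, Cf10, Cf11, Cf12, Cf20, Cf21, Cf22).

Definition Gf (R : rcfType) (sp : Mod R -> Mod R -> R * R) (a b : 'rV[R]_3) : R :=
  (sp (a, 0) (b, 0)).1.
Definition Hf (R : rcfType) (sp : Mod R -> Mod R -> R * R) (a b : 'rV[R]_3) : R :=
  (sp (a, 0) (b, 0)).2.

Section SP.
Variables (R : rcfType) (sp : Mod R -> Mod R -> R * R).
Hypothesis hsp : is_scalar_product sp.
Local Notation G := (Gf sp).
Local Notation H := (Hf sp).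

Lemma sp_lin c x y w : sp (dscale c x + y) w = dadd (dmul c (sp x w)) (sp y w).
Proof. by case: hsp. Qed.

Lemma sp_sym x y : sp x y = sp y x.
Proof. by case: hsp => _ []. Qed.

Lemma dscale1 (x : Mod R) : dscale (1, 0) x = x.
Proof. by case: x => a b; rewrite /dscale /= !scale1r scale0r addr0. Qed.

Lemma sp0l w : sp 0 w = (0, 0).
Proof.
have := sp_lin (1, 0) 0 0 w; rewrite dscale1 addr0.
case: (sp 0 w) => a b [] /= ha hb.
have -> : a = 0 by move: ha; rewrite mul1r; lra.
have -> : b = 0 by move: hb; rewrite mul1r mul0r addr0; lra.
by [].
Qed.

Lemma sp_scale c x w : sp (dscale c x) w = dmul c (sp x w).
Proof.
have := sp_lin c x 0 w; rewrite addr0 sp0l => ->.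
by case: (dmul _ _) => a b; rewrite /dadd /= !addr0.
Qed.

Lemma sp_add x y w : sp (x + y) w = dadd (sp x w) (sp y w).
Proof.
have := sp_lin (1, 0) x y w; rewrite dscale1 => ->.
by case: (sp x w) => a b; rewrite /dmul /= mul1r mul1r mul0r addr0.
Qed.

Lemma dscaleZ k (x : Mod R) : dscale (k, 0) x = k *: x.
Proof. by case: x => a b; rewrite /dscale /= scale0r addr0. Qed.

Lemma sp_linZ k x y w : sp (k *: x + y) w =
  (k * (sp x w).1 + (sp y w).1, k * (sp x w).2 + (sp y w).2).
Proof. by rewrite -dscaleZ sp_lin /dadd /dmul /= mul0r addr0. Qed.

Lemma decomp (x : Mod R) : x = dscale (0, 1) (x.2, 0) + (x.1, 0).
Proof.
by case: x => a b; rewrite /dscale /= scale0r scale1r scaler0 add0r; congr (_, _); rewrite ?addr0 ?add0r.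
Qed.

Lemma spL x y : sp x y = ((sp (x.1, 0) y).1, (sp (x.2, 0) y).1 + (sp (x.1, 0) y).2).
Proof.
rewrite {1}(decomp x) sp_lin /dadd /dmul /= mul0r add0r mul0r add0r mul1r.
by [].
Qed.

Lemma G_sym a b : G a b = G b a.
Proof. by rewrite /Gf sp_sym. Qed.

Lemma H_sym a b : H a b = H b a.
Proof. by rewrite /Hf sp_sym. Qed.

Lemma sp_pair a y : sp (a, 0) y = (G a y.1, H a y.1 + G a y.2).
Proof.
rewrite sp_sym spL sp_sym [sp (y.2, 0) _]sp_sym /=.
by rewrite /Gf /Hf addrC.
Qed.

Lemma spE x y : sp x y = (G x.1 y.1, H x.1 y.1 + G x.2 y.1 + G x.1 y.2).
Proof.
rewrite spL !sp_pair /=; congr (_, _); ring.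
Qed.

Lemma G_linl k a b c : G (k *: a + b) c = k * G a c + G b c.
Proof.
have e : ((k *: a + b, 0) : Mod R) = k *: (a, 0) + (b, 0).
  by congr (_, _) => /=; rewrite ?scaler0 ?addr0.
by rewrite /Gf e sp_linZ.
Qed.

Lemma H_linl k a b c : H (k *: a + b) c = k * H a c + H b c.
Proof.
have e : ((k *: a + b, 0) : Mod R) = k *: (a, 0) + (b, 0).
  by congr (_, _) => /=; rewrite ?scaler0 ?addr0.
by rewrite /Hf e sp_linZ.
Qed.

End SP.

Definition linf (R : rcfType) (f : 'rV[R]_3 -> 'rV[R]_3) :=
  forall k a b, f (k *: a + b) = k *: f a + f b.

Definition ortn (R : rcfType) (sp : Mod R -> Mod R -> R * R) (e : 'I_3 -> 'rV[R]_3) :=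
  forall i j, Gf sp (e i) (e j) = (i == j)%:R.

Definition Emx (R : rcfType) (e : 'I_3 -> 'rV[R]_3) : 'M[R]_3 := \matrix_(i < 3, j < 3) e i 0 j.

Lemma xx0 (V : zmodType) (x : V) : x = x + x -> x = 0.
Proof. by move/(congr1 (fun t => t - x)); rewrite addrK subrr => <-. Qed.

Section LA.
Variables (R : rcfType) (sp : Mod R -> Mod R -> R * R).
Hypothesis hsp : is_scalar_product sp.
Local Notation G := (Gf sp).
Local Notation H := (Hf sp).

Lemma lin0 (f : 'rV[R]_3 -> 'rV[R]_3) : linf f -> f 0 = 0.
Proof. move=> hf; have := hf 1 0 0; rewrite !scale1r addr0; exact: xx0. Qed.

Lemma linD (f : 'rV[R]_3 -> 'rV[R]_3) : linf f -> forall a b, f (a + b) = f a + f b.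
Proof. by move=> hf a b; have := hf 1 a b; rewrite !scale1r. Qed.

Lemma linZ (f : 'rV[R]_3 -> 'rV[R]_3) : linf f -> forall k a, f (k *: a) = k *: f a.
Proof. by move=> hf k a; rewrite -[k *: a]addr0 hf lin0 // addr0. Qed.

Lemma linN (f : 'rV[R]_3 -> 'rV[R]_3) : linf f -> forall a, f (- a) = - f a.
Proof. by move=> hf a; rewrite -scaleN1r linZ // scaleN1r. Qed.

Lemma linB (f : 'rV[R]_3 -> 'rV[R]_3) : linf f -> forall a b, f (a - b) = f a - f b.
Proof. by move=> hf a b; rewrite linD // linN. Qed.

Lemma lin_sum (f : 'rV[R]_3 -> 'rV[R]_3) (c : 'I_3 -> R) (v : 'I_3 -> 'rV[R]_3) : linf f ->
  f (\sum_i c i *: v i) = \sum_i c i *: f (v i).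
Proof. by move=> hf; rewrite !sum3 !(linD hf) !(linZ hf). Qed.

Lemma G0l b : G 0 b = 0.
Proof. have := G_linl hsp 1 0 0 b; rewrite scale1r addr0 mul1r; exact: xx0. Qed.

Lemma GDl a b c : G (a + b) c = G a c + G b c.
Proof. by have := G_linl hsp 1 a b c; rewrite scale1r mul1r. Qed.

Lemma GZl k a c : G (k *: a) c = k * G a c.
Proof. by rewrite -[k *: a]addr0 G_linl // G0l addr0. Qed.

Lemma GNl a c : G (- a) c = - G a c.
Proof. by rewrite -scaleN1r GZl mulN1r. Qed.

Lemma GBl a b c : G (a - b) c = G a c - G b c.
Proof. by rewrite GDl GNl. Qed.

Lemma G0r b : G b 0 = 0.
Proof. by rewrite G_sym // G0l. Qed.
Lemma GDr a b c : G c (a + b) = G c a + G c b.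
Proof. by rewrite !(G_sym hsp c) GDl. Qed.
Lemma GZr k a c : G c (k *: a) = k * G c a.
Proof. by rewrite !(G_sym hsp c) GZl. Qed.
Lemma GNr a c : G c (- a) = - G c a.
Proof. by rewrite !(G_sym hsp c) GNl. Qed.
Lemma GBr a b c : G c (a - b) = G c a - G c b.
Proof. by rewrite !(G_sym hsp c) GBl. Qed.

Lemma G_suml (c : 'I_3 -> R) v b : G (\sum_i c i *: v i) b = \sum_i c i * G (v i) b.
Proof. by rewrite !sum3 !GDl !GZl. Qed.
Lemma G_sumr (c : 'I_3 -> R) v b : G b (\sum_i c i *: v i) = \sum_i c i * G b (v i).
Proof. by rewrite !sum3 !GDr !GZr. Qed.

Lemma H0l b : H 0 b = 0.
Proof. have := H_linl hsp 1 0 0 b; rewrite scale1r addr0 mul1r; exact: xx0. Qed.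
Lemma HDl a b c : H (a + b) c = H a c + H b c.
Proof. by have := H_linl hsp 1 a b c; rewrite scale1r mul1r. Qed.
Lemma HZl k a c : H (k *: a) c = k * H a c.
Proof. by rewrite -[k *: a]addr0 H_linl // H0l addr0. Qed.
Lemma HDr a b c : H c (a + b) = H c a + H c b.
Proof. by rewrite !(H_sym hsp c) HDl. Qed.
Lemma HZr k a c : H c (k *: a) = k * H c a.
Proof. by rewrite !(H_sym hsp c) HZl. Qed.

Lemma G_ge0 a : 0 <= G a a.
Proof. by case: hsp => _ [_ /(_ (a, 0)) []]. Qed.

Lemma G_eq0 a : G a a = 0 -> a = 0.
Proof.
case: hsp => _ [_ /(_ (a, 0)) [_ [h _]]] /h [y] [-> _]; by [].
Qed.

Lemma G_gt0 a : a != 0 -> 0 < G a a.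
Proof.
move=> a0; rewrite lt_neqAle G_ge0 andbT eq_sym; apply/eqP => /G_eq0 h.
by rewrite h eqxx in a0.
Qed.

Lemma rowE (e : 'I_3 -> 'rV[R]_3) i : row i (Emx e) = e i.
Proof. by apply/rowP => j; rewrite !mxE. Qed.

Lemma EmxM (e : 'I_3 -> 'rV[R]_3) (x : 'rV[R]_3) : x *m Emx e = \sum_i x 0 i *: e i.
Proof. by rewrite mulmx_sum_row; apply: eq_bigr => i _; rewrite rowE. Qed.

Lemma ortho_coord e (c : 'I_3 -> R) j : ortn sp e -> G (\sum_i c i *: e i) (e j) = c j.
Proof.
move=> he; rewrite G_suml !sum3 !he.
by elim/ord3P: j; rewrite /= ?mulr1 ?mulr0 ?addr0 ?add0r.
Qed.

Lemma frame_exp e a : ortn sp e -> \det (Emx e) != 0 -> a = \sum_i G a (e i) *: e i.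
Proof.
move=> he hd.
have hu : Emx e \in unitmx by rewrite unitmxE unitfE.
have ha : a = \sum_i (a *m invmx (Emx e)) 0 i *: e i by rewrite -EmxM mulmxKV.
rewrite {1}ha; apply: eq_bigr => i _; congr (_ *: _).
by rewrite {2}ha ortho_coord.
Qed.

Lemma ortho_det e : ortn sp e -> \det (Emx e) != 0.
Proof.
move=> he; apply/negP => /det0P [v v0]; rewrite EmxM => hv.
move/negP: v0; apply; apply/eqP/rowP => j; rewrite mxE.
have := ortho_coord (fun i => v 0 i) j he; rewrite hv G0l.
by move=> ->.
Qed.

End LA.

Definition dl (R : rcfType) (i : 'I_3) : 'rV[R]_3 := delta_mx 0 i.

Definition Gr (R : rcfType) (L : 'rV[R]_3 -> 'rV[R]_3) : {vspace Mod R} :=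
  <<[:: (dl R i0, L (dl R i0)); (dl R i1, L (dl R i1)); (dl R i2, L (dl R i2))]>>%VS.

Lemma fst_sum (R : rcfType) I r (P : pred I) (F : I -> Mod R) :
  (\sum_(i <- r | P i) F i).1 = \sum_(i <- r | P i) (F i).1.
Proof. by apply: (big_morph fst). Qed.
Lemma snd_sum (R : rcfType) I r (P : pred I) (F : I -> Mod R) :
  (\sum_(i <- r | P i) F i).2 = \sum_(i <- r | P i) (F i).2.
Proof. by apply: (big_morph snd). Qed.

Lemma dl_sum (R : rcfType) (a : 'rV[R]_3) : a = \sum_i a 0 i *: dl R i.
Proof. exact: row_sum_delta. Qed.

Lemma dl_coord (R : rcfType) (c : 'I_3 -> R) j : (\sum_i c i *: dl R i) 0 j = c j.
Proof.
rewrite sum3 !mxE /=.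
by elim/ord3P: j; rewrite /= ?mulr1 ?mulr0 ?addr0 ?add0r.
Qed.

Lemma pairE (R : rcfType) (x y : Mod R) : x.1 = y.1 -> x.2 = y.2 -> x = y.
Proof. by case: x => ? ?; case: y => ? ? /= -> ->. Qed.

Section ES.
Variables (R : rcfType) (sp : Mod R -> Mod R -> R * R).
Hypothesis hsp : is_scalar_product sp.
Local Notation G := (Gf sp).
Local Notation H := (Hf sp).

Lemma epsM_fst (x : Mod R) : x.1 = 0 -> in_epsM x.
Proof. by move=> h; exists (x.2, 0); apply: pairE. Qed.

Lemma lift_uniq P x y : in_E sp P -> x \in P -> y \in P -> x.1 = y.1 -> x = y.
Proof.
move=> [_ [_ hP]] hx hy h1.
have : x - y = 0 by apply: hP; [rewrite memvB | apply: epsM_fst; rewrite /= h1 subrr].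
by move/eqP; rewrite subr_eq0 => /eqP.
Qed.

Lemma memGr (L : 'rV[R]_3 -> 'rV[R]_3) (x : Mod R) : linf L -> (x \in Gr L) <-> x.2 = L x.1.
Proof.
move=> hL; split.
  move=> hx; have := coord_span (X := [tuple (dl R i0, L (dl R i0)); (dl R i1, L (dl R i1)); (dl R i2, L (dl R i2))]) hx.
  by rewrite sum3 /= => ->; rewrite /= !(linD hL) !(linZ hL).
move=> h2.
have -> : x = \sum_i x.1 0 i *: (dl R i, L (dl R i)).
  apply: pairE; first by rewrite fst_sum -dl_sum.
  by rewrite snd_sum h2 {1}(dl_sum x.1) (lin_sum _ _ hL).
by rewrite sum3; apply: memvD; first apply: memvD; apply: memvZ; apply: memv_span;
  rewrite !inE eqxx ?orbT.
Qed.

Lemma GrE (L : 'rV[R]_3 -> 'rV[R]_3) : linf L ->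
  (forall a b, H a b + G (L a) b + G a (L b) = 0) -> in_E sp (Gr L).
Proof.
move=> hL hQ; split; [|split].
- have hf : free [tuple (dl R i0, L (dl R i0)); (dl R i1, L (dl R i1)); (dl R i2, L (dl R i2))].
    apply/freeP => k hk i.
    have := congr1 (fun v : Mod R => v.1 0 i) hk.
    rewrite /= sum3 /= -(sum3 (fun j => k j *: dl R j)) dl_coord => ->.
    by rewrite mxE.
  by move/eqP: hf.
- move=> x y /(memGr _ hL) hx /(memGr _ hL) hy.
  by rewrite (spE hsp) /= hx hy hQ.
- move=> x /(memGr _ hL) hx [y] hy.
  have h1 : x.1 = 0 by rewrite hy.
  by apply: pairE => //=; rewrite hx h1 (lin0 hL).
Qed.

Lemma lift_ex P : in_E sp P -> forall a, exists2 x, x \in P & x.1 = a.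
Proof.
move=> hP a.
have hb := vbasisP P.
set X := vbasis P.
set Y := map_tuple fst X.
have hY : free Y.
  apply/freeP => k hk i.
  have hs : \sum_i k i *: X`_i \in P.
    by apply: memv_suml => j _; apply: memvZ; apply: vbasis_mem; apply: mem_nth; rewrite size_tuple.
  have h0 : \sum_i k i *: X`_i = 0.
    case: hP => _ [_ hP]; apply: hP => //; apply: epsM_fst.
    rewrite fst_sum -[RHS]hk; apply: eq_bigr => j _ /=; rewrite /Y /=.
    by rewrite (nth_map 0) // size_tuple.
  by move/freeP: (basis_free hb) => /(_ k h0 i).
have hfull : <<Y>>%VS = fullv.
  apply/eqP; rewrite eqEdim subvf /=.
  move: (hY); rewrite /free => /eqP ->.
  rewrite dimvf dim_matrix size_tuple.
  by case: hP => -> _.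
have : a \in <<Y>>%VS by rewrite hfull memvf.
move/coord_span => ha.
exists (\sum_i coord Y i a *: X`_i).
  by apply: memv_suml => j _; apply: memvZ; apply: vbasis_mem; apply: mem_nth; rewrite size_tuple.
rewrite fst_sum {2}ha; apply: eq_bigr => j _ /=; rewrite /Y /=.
by rewrite (nth_map 0) // size_tuple.
Qed.

End ES.

Definition Tm (R : rcfType) (sp : Mod R -> Mod R -> R * R) (e : 'I_3 -> 'rV[R]_3)
  (d : 'I_3 -> R) (a : 'rV[R]_3) : 'rV[R]_3 :=
  \sum_i Gf sp a (e i) *: \sum_j Cf d i j *: e j.

Lemma cross_ker (R : rcfType) (x d : 'I_3 -> R) :
  (forall j, \sum_i x i * Cf d i j = 0) ->
  (forall k, d k = 0) \/ exists l, forall i, x i = l * d i.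
Proof.
move=> h.
have h0 := h i0; have h1 := h i1; have h2 := h i2.
rewrite !sum3 !CfE in h0 h1 h2.
have [d0|d0] := eqVneq (d i0) 0.
  have [d1|d1] := eqVneq (d i1) 0.
    have [d2|d2] := eqVneq (d i2) 0.
      by left; elim/ord3P.
    right; exists (x i2 / d i2); elim/ord3P; rewrite ?d0 ?d1 ?mulr0.
    - by apply: (mulIf d2); rewrite mul0r; move: h1; rewrite ?d0 ?d1; lra.
    - by apply: (mulIf d2); rewrite mul0r; move: h0; rewrite ?d0 ?d1; lra.
    - by rewrite divfK.
  right; exists (x i1 / d i1); elim/ord3P; rewrite ?d0 ?mulr0.
  - by apply: (mulIf d1); rewrite mul0r; move: h2; rewrite ?d0; lra.
  - by rewrite divfK.
  - apply: (mulIf d1); rewrite mulrAC divfK //; move: h0; lra.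
right; exists (x i0 / d i0); elim/ord3P.
- by rewrite divfK.
- apply: (mulIf d0); rewrite mulrAC divfK //; move: h2; lra.
- apply: (mulIf d0); rewrite mulrAC divfK //; move: h1; lra.
Qed.

Section TT.
Variables (R : rcfType) (sp : Mod R -> Mod R -> R * R).
Hypothesis hsp : is_scalar_product sp.
Local Notation G := (Gf sp).
Local Notation H := (Hf sp).

Lemma pos_ortho o e : pos_orthonormal sp o e -> ortn sp e /\ \det (Emx e) != 0.
Proof.
case=> ho hd; split => //.
by case: o hd; rewrite /Emx => h; [rewrite gt_eqF | rewrite lt_eqF].
Qed.

Lemma vec_ext e u v : ortn sp e -> \det (Emx e) != 0 ->
  (forall j, G u (e j) = G v (e j)) -> u = v.
Proof.
move=> he hd h; rewrite (frame_exp hsp u he hd) (frame_exp hsp v he hd).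
by apply: eq_bigr => i _; rewrite h.
Qed.

Lemma T_lin e d : linf (Tm sp e d).
Proof.
move=> k a b; rewrite /Tm scaler_sumr -big_split /=; apply: eq_bigr => i _.
by rewrite G_linl // scalerDl scalerA.
Qed.

Lemma TG e d a j : ortn sp e -> G (Tm sp e d a) (e j) = \sum_i G a (e i) * Cf d i j.
Proof.
move=> he; rewrite /Tm G_suml // ; apply: eq_bigr => i _.
by rewrite ortho_coord.
Qed.

Lemma T_antisym e d a b : ortn sp e -> \det (Emx e) != 0 ->
  G (Tm sp e d a) b = - G a (Tm sp e d b).
Proof.
move=> he hd.
rewrite (G_sym hsp a) {1}(frame_exp hsp b he hd) {2}(frame_exp hsp a he hd).
rewrite !G_sumr // !sum3 !TG // !sum3 !CfE.
ring.
Qed.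

Lemma T_self e d : ortn sp e -> \det (Emx e) != 0 ->
  Tm sp e d (\sum_k d k *: e k) = 0.
Proof.
move=> he hd; apply: (vec_ext he hd) => j.
rewrite TG // G0l //.
have hc : forall i, G (\sum_k d k *: e k) (e i) = d i by move=> i; rewrite ortho_coord.
rewrite (eq_bigr (fun i => d i * Cf d i j)); last by move=> i _; rewrite hc.
rewrite sum3; elim/ord3P: j; rewrite !CfE; ring.
Qed.

Lemma T_kernel e d x : ortn sp e -> \det (Emx e) != 0 -> Tm sp e d x = 0 ->
  (forall k, d k = 0) \/ exists l, x = l *: \sum_k d k *: e k.
Proof.
move=> he hd hx.
have := @cross_ker R (fun i => G x (e i)) d.
case.
- by move=> j; rewrite -TG // hx G0l.
- by left.
- move=> [l hl]; right; exists l.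
  rewrite (frame_exp hsp x he hd) scaler_sumr; apply: eq_bigr => i _.
  by rewrite hl scalerA.
Qed.

Lemma T0 e d : (forall k, d k = 0) -> forall a, Tm sp e d a = 0.
Proof.
move=> h a; rewrite /Tm big1 // => i _.
by rewrite big1 ?scaler0 // => j _; rewrite /Cf big1 ?scale0r // => k _; rewrite h mulr0.
Qed.

Lemma T_zero e d : ortn sp e -> \det (Emx e) != 0 -> (forall a, Tm sp e d a = 0) ->
  forall k, d k = 0.
Proof.
move=> he hd h.
have hc : forall i j, Cf d i j = 0.
  move=> i j; have := TG d (e i) j he; rewrite h (G0l hsp).
  rewrite !sum3 !he /= => ->.
  by elim/ord3P: i; rewrite /= ?mul1r ?mul0r ?addr0 ?add0r.
elim/ord3P.
- by rewrite -(Cf12 d) hc.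
- by rewrite -(Cf20 d) hc.
- by rewrite -(Cf01 d) hc.
Qed.

Lemma linA (f g : 'rV[R]_3 -> 'rV[R]_3) : linf f -> linf g -> linf (fun a => f a + g a).
Proof.
move=> hf hg k a b; rewrite hf hg scalerDr.
by rewrite -!addrA; congr (_ + _); rewrite addrCA.
Qed.

End TT.

Lemma perp_par (R : rcfType) (y p r : 'I_3 -> R) :
  \sum_i y i * p i = 0 -> \sum_i y i * r i = 0 ->
  (forall j, \sum_i r i * Cf p i j = 0) \/
  exists l, forall i, y i = l * \sum_j r j * Cf p j i.
Proof.
move=> hp hr.
have := @cross_ker R y (fun j => \sum_i r i * Cf p i j).
case.
- move=> j.
  have -> : \sum_i y i * Cf (fun j => \sum_i r i * Cf p i j) i j =
      r j * (\sum_i y i * p i) - p j * (\sum_i y i * r i).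
    by elim/ord3P: j; rewrite !sum3 !CfE !sum3 !CfE; ring.
  by rewrite hp hr !mulr0 subrr.
- by left.
- by right.
Qed.

Lemma sum2 (V : nmodType) (F : 'I_2 -> V) : \sum_(i < 2) F i = F ord0 + F ord_max.
Proof. by rewrite !big_ord_recr big_ord0 /= add0r; congr (F _ + F _); apply: val_inj. Qed.

Lemma vec3 (R : rcfType) (V : lmodType R) (a1 a2 a3 b1 b2 b3 : V) :
  (a1 + b1) + (a2 + b2) + (a3 + b3) = (a1 + a2 + a3) + (b1 + b2 + b3).
Proof. by rewrite [(a1 + b1) + _]addrACA [LHS]addrACA. Qed.

Lemma dep3 (R : rcfType) (z1 z2 z3 : Mod R) (m1 m2 m3 t1 t2 t3 : R) (w m n : 'rV[R]_3) :
  m1 != 0 -> m2 != 0 -> m3 != 0 ->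
  z1 = m1 *: ((w, m + t1 *: n) : Mod R) -> z2 = m2 *: ((w, m + t2 *: n) : Mod R) ->
  z3 = m3 *: ((w, m + t3 *: n) : Mod R) -> ~~ free [:: z1; z2; z3].
Proof.
move=> h1 h2 h3 e1 e2 e3.
have [c1 [c2 [c3 [hc [hs ht]]]]] : exists c1 c2 c3 : R,
    [/\ (c1 != 0) || (c2 != 0), c1 + c2 + c3 = 0 & c1 * t1 + c2 * t2 + c3 * t3 = 0].
  have [et|et] := eqVneq t1 t2.
    exists 1, (-1), 0; rewrite oner_eq0 /= et; split => //; ring.
  exists (t2 - t3), (t3 - t1), (t1 - t2); split; last 2 first.
  - ring.
  - ring.
  case: (eqVneq (t2 - t3) 0) => //= e23; rewrite subr_eq0; apply/negP => /eqP e31.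
  by move/eqP: et; apply; move/eqP: e23; rewrite subr_eq0 e31 => /eqP.
apply/negP => /(@freeP _ _ 3 [tuple z1; z2; z3]) hf.
have := hf (fun i => [:: c1 / m1; c2 / m2; c3 / m3]`_i).
rewrite sum3 /= e1 e2 e3 !scalerA !divfK //.
have -> : c1 *: ((w, m + t1 *: n) : Mod R) + c2 *: (w, m + t2 *: n) + c3 *: (w, m + t3 *: n) = 0.
  apply: pairE => /=.
    by rewrite -!scalerDl hs scale0r.
  have E : forall (a b : R), a *: (m + b *: n) = a *: m + (a * b) *: n.
    by move=> a b; rewrite scalerDr scalerA.
  by rewrite !E vec3 -!scalerDl hs ht !scale0r addr0.
move=> /(_ erefl) hk.
move: hc; have := hk i0; have := hk i1 => /=.
move=> /eqP; rewrite mulf_eq0 invr_eq0 (negbTE h2) orbF => /eqP ->.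
move=> /eqP; rewrite mulf_eq0 invr_eq0 (negbTE h1) orbF => /eqP ->.
by rewrite eqxx.
Qed.

Section SL.
Variables (R : rcfType) (sp : Mod R -> Mod R -> R * R).
Hypothesis hsp : is_scalar_product sp.
Local Notation G := (Gf sp).
Local Notation H := (Hf sp).

Lemma sp_dd a b u : sp (dscale (a, b) u) (dscale (a, b) u) = dmul (a, b) (dmul (a, b) (sp u u)).
Proof. by rewrite sp_scale // sp_sym // sp_scale // sp_sym. Qed.

Lemma sl_fst z : is_sliding sp z -> z.1 != 0.
Proof. by case=> hz _; apply/eqP => h; apply: hz; apply: epsM_fst. Qed.

Lemma sl_dec z : is_sliding sp z -> exists a u, 0 < a /\ sp u u = (1, 0) /\ z = a *: u.
Proof.
case=> _ [a [b [u [[ha [hu ->]] hb]]]].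
have -> : b = 0.
  by move/eqP: hb; rewrite mulf_eq0 invr_eq0 (gt_eqF ha) orbF => /eqP.
by exists a, u; rewrite dscaleZ.
Qed.

Lemma sl_sp2 z : is_sliding sp z -> (sp z z).2 = 0.
Proof.
move/sl_dec => [a [u [_ [hu ->]]]].
by rewrite -dscaleZ sp_dd hu /dmul /=; ring.
Qed.

Lemma sl_axis z P : is_sliding sp z -> in_E sp P -> z \in P -> on_axis sp z P.
Proof.
move=> hz hP hzP; split => //.
case: (hz) => _ [a [b [u [[ha [hu hzu]] hb]]]].
have hb0 : b = 0 by move/eqP: hb; rewrite mulf_eq0 invr_eq0 (gt_eqF ha) orbF => /eqP.
exists a, b, u; split; first by [].
have -> : u = a^-1 *: z by rewrite hzu hb0 dscaleZ scalerA mulVf ?gt_eqF // scale1r.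
by rewrite memvZ.
Qed.

Lemma axis_mem z P : is_sliding sp z -> on_axis sp z P -> z \in P.
Proof.
move=> hz [_ [a [b [u [[ha [hu hzu]] huP]]]]].
have h2 := sl_sp2 hz.
rewrite hzu sp_dd // hu /dmul /= in h2.
have hb : b = 0.
  have : a * b * 2 = 0 by rewrite -h2; ring.
  by move/eqP; rewrite !mulf_eq0 (gt_eqF ha) pnatr_eq0 /= orbF => /eqP.
by rewrite hzu hb dscaleZ memvZ.
Qed.

Lemma par_mul z1 z2 : is_sliding sp z2 -> parallel_axes sp z1 z2 ->
  exists m, m != 0 /\ z2.1 = m *: z1.1.
Proof.
move=> h2 [w1 [w2 [[a1 [b1 [u1 [[ha1 [_ hz1]] e1]]]] [[a2 [b2 [u2 [[ha2 [_ hz2]] e2]]]] hl]]]].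
move: (memv_line w2); rewrite -hl => /vlineP [k hk].
have hz : z2.1 = (a2 * k / a1) *: z1.1.
  rewrite hz2 hz1 /= -/(proj u2) -e2 hk e1 /proj !scalerA; congr (_ *: _).
  by field; rewrite gt_eqF.
exists (a2 * k / a1); split => //.
apply/eqP => h0; move: (sl_fst h2); by rewrite hz h0 scale0r eqxx.
Qed.
End SL.

Section Back.
Variables (R : rcfType) (sp : Mod R -> Mod R -> R * R).
Hypothesis hsp : is_scalar_product sp.
Local Notation G := (Gf sp).
Local Notation H := (Hf sp).

Lemma Lt_ex A0 : in_E sp A0 -> exists Lt, linf Lt /\ forall a, (a, Lt a) \in A0.
Proof.
move=> hA.
have [b hb] : exists b : 'I_3 -> Mod R, forall i, b i \in A0 /\ (b i).1 = dl R i.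
  have [x0 h0 e0] := lift_ex hA (dl R i0).
  have [x1 h1 e1] := lift_ex hA (dl R i1).
  have [x2 h2 e2] := lift_ex hA (dl R i2).
  by exists (fun i => [:: x0; x1; x2]`_i); elim/ord3P.
have hsum : forall a : 'rV[R]_3, (a, (\sum_i a 0 i *: b i).2) = \sum_i a 0 i *: b i.
  move=> a; apply: pairE => //=.
  rewrite fst_sum {1}(dl_sum a); apply: eq_bigr => i _ /=.
  by case: (hb i) => _ ->.
exists (fun a => (\sum_i a 0 i *: b i).2); split.
  move=> k a a'; rewrite !snd_sum scaler_sumr -big_split /=; apply: eq_bigr => i _.
  by rewrite !mxE scalerDl scalerA.
move=> a; rewrite hsum; apply: memv_suml => i _; apply: memvZ.
by case: (hb i).
Qed.

Variables (A0 : {vspace Mod R}) (Lt : 'rV[R]_3 -> 'rV[R]_3).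
Hypotheses (hA0 : in_E sp A0) (hLt : linf Lt) (hLA : forall a, (a, Lt a) \in A0).

Lemma Q0 a b : H a b + G (Lt a) b + G a (Lt b) = 0.
Proof.
case: hA0 => _ [h _]; have := h _ _ (hLA a) (hLA b).
by rewrite (spE hsp).
Qed.

Lemma A0uniq x : x \in A0 -> x.2 = Lt x.1.
Proof.
move=> hx; have := lift_uniq hA0 hx (hLA x.1) erefl.
by move=> ->.
Qed.

Definition Pg (D : 'rV[R]_3 -> 'rV[R]_3) := Gr (fun a => Lt a + D a).

Definition asym (D : 'rV[R]_3 -> 'rV[R]_3) := forall a b, G (D a) b = - G a (D b).

Lemma Pg_E D : linf D -> asym D -> in_E sp (Pg D).
Proof.
move=> hD hs; apply: GrE => //; first exact: linA.
move=> a b; rewrite (GDl hsp) (GDr hsp).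
have := Q0 a b; rewrite hs; lra.
Qed.

Lemma memPg D x : linf D -> (x \in Pg D) <-> x.2 = Lt x.1 + D x.1.
Proof. by move=> hD; apply: memGr; apply: linA. Qed.

Lemma Diff_T o D v : linf D -> Diff sp o A0 (Pg D) v ->
  exists e d, [/\ ortn sp e, \det (Emx e) != 0, v = \sum_k d k *: e k &
    forall a, D a = Tm sp e d a].
Proof.
move=> hD [e [he [d [hv hrel]]]].
have [ho hd] := pos_ortho he.
exists e, d; split => //.
have hi : forall i, D (e i) = \sum_j Cf d i j *: e j.
  move=> i.
  have hA : forall j, (e j, Lt (e j)) \in A0 /\ proj (e j, Lt (e j)) = e j.
    by move=> j; split.
  have hB : forall j, (e j, Lt (e j) + D (e j)) \in Pg D /\ proj (e j, Lt (e j) + D (e j)) = e j.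
    by move=> j; split => //; apply/memPg.
  have := hrel _ _ hA hB i => /(congr1 (fun x : Mod R => x.2)) /=.
  move/addrI => ->.
  rewrite fst_sum.
  by apply: eq_bigr => j _; rewrite fst_sum /= /Cf scaler_suml; apply: eq_bigr.
move=> a; rewrite {1}(frame_exp hsp a ho hd) (lin_sum _ _ hD) /Tm.
by apply: eq_bigr => i _; rewrite hi.
Qed.

Lemma G_frame e a b : ortn sp e -> \det (Emx e) != 0 ->
  G a b = \sum_k G a (e k) * G b (e k).
Proof.
move=> he hd; rewrite {1}(frame_exp hsp b he hd) (G_sumr hsp).
by apply: eq_bigr => k _; rewrite mulrC.
Qed.

Lemma T_addd e d d' a : Tm sp e d a + Tm sp e d' a = Tm sp e (fun k => d k + d' k) a.
Proof.
rewrite /Tm -big_split /=; apply: eq_bigr => i _; rewrite -scalerDr; congr (_ *: _).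
rewrite -big_split /=; apply: eq_bigr => j _; rewrite -scalerDl; congr (_ *: _).
by rewrite /Cf -big_split /=; apply: eq_bigr => k _; rewrite mulrDr.
Qed.

Lemma lin_comb (al be : 'rV[R]_3 -> R) (y w : 'rV[R]_3) :
  (forall k a b, al (k *: a + b) = k * al a + al b) ->
  (forall k a b, be (k *: a + b) = k * be a + be b) ->
  linf (fun a => al a *: y - be a *: w).
Proof.
move=> ha hb k a b; rewrite ha hb !scalerDl opprD addrACA.
by rewrite scalerBr !scalerA.
Qed.

Lemma Dgen (w y : 'rV[R]_3) : 0 < G w w -> G y w = 0 ->
  exists D, [/\ linf D, asym D & D w = y].
Proof.
move=> hw hyw.
exists (fun a => (G a w / G w w) *: y - (G a y / G w w) *: w); split.
- apply: lin_comb => k a b; by rewrite (G_linl hsp) mulrDl mulrA.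
- move=> a b /=; rewrite (GBl hsp) !(GZl hsp) (GBr hsp) !(GZr hsp).
  rewrite !(G_sym hsp b w) !(G_sym hsp b y); field.
  by rewrite gt_eqF.
- rewrite divff ?gt_eqF // scale1r (G_sym hsp w y) hyw mul0r scale0r subr0.
  by [].
Qed.

Lemma Dz_props z : is_sliding sp z ->
  exists D, [/\ linf D, asym D & D z.1 = z.2 - Lt z.1].
Proof.
move=> hz; apply: Dgen.
  by apply: (G_gt0 hsp); exact: (sl_fst hz).
have := sl_sp2 hsp hz; rewrite (spE hsp) /= => h.
have := Q0 z.1 z.1; rewrite (GBl hsp) (G_sym hsp z.1 z.2) (G_sym hsp z.1 (Lt z.1)) in h *.
move: h; lra.
Qed.

Variables (o : bool) (z1 z2 z3 : Mod R) (W : {vspace 'rV[R]_3}).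
Hypotheses (hW : \dim W = 2%N)
  (hcop : forall z P, z \in [:: z1; z2; z3] -> on_axis sp z P ->
     exists2 w, w \in W & Diff sp o A0 P w).

Lemma getT D z : linf D -> asym D -> z \in [:: z1; z2; z3] -> is_sliding sp z ->
  D z.1 = z.2 - Lt z.1 ->
  exists e d, [/\ ortn sp e, \det (Emx e) != 0, \sum_k d k *: e k \in W &
    forall a, D a = Tm sp e d a].
Proof.
move=> hD ha hzl hz hDz.
have hzP : z \in Pg D by apply/memPg => //; rewrite hDz addrC subrK.
have [v hv hdiff] := hcop hzl (sl_axis hz (Pg_E hD ha) hzP).
have [e [d [ho hd hvv hT]]] := Diff_T hD hdiff.
by exists e, d; split => //; rewrite -hvv.
Qed.

Lemma wW : is_sliding sp z1 -> z1.1 \in W.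
Proof.
move=> hz1.
have [D1 [hD1 ha1 hD1z]] := Dz_props hz1.
have hz1l : z1 \in [:: z1; z2; z3] by rewrite mem_head.
have [e [d [ho hd hv hT]]] := getT hD1 ha1 hz1l hz1 hD1z.
pose dl' := fun k => G z1.1 (e k).
pose D' := fun a => D1 a + Tm sp e dl' a.
have hD' : linf D' by apply: linA => //; apply: T_lin.
have ha' : asym D'.
  move=> a b; rewrite /D' (GDl hsp) (GDr hsp) ha1 (T_antisym hsp) //.
  by rewrite opprD.
have hw : z1.1 = \sum_k dl' k *: e k by apply: frame_exp.
have hT0 : Tm sp e dl' z1.1 = 0 by rewrite {1}hw T_self.
have hD'z : D' z1.1 = z1.2 - Lt z1.1 by rewrite /D' hT0 addr0.
have [e2 [d2 [ho2 hd2 hv2 hT2]]] := getT hD' ha' hz1l hz1 hD'z.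
pose x := \sum_k (d k + dl' k) *: e k.
have hDx : forall a, D' a = Tm sp e (fun k => d k + dl' k) a.
  by move=> a; rewrite /D' hT T_addd.
have hx0 : Tm sp e2 d2 x = 0 by rewrite -hT2 hDx T_self.
have hxW : x \in W.
  case: (T_kernel hsp ho2 hd2 hx0).
  - move=> h0.
    have hz : forall a, Tm sp e (fun k => d k + dl' k) a = 0.
      by move=> a; rewrite -hDx hT2 T0.
    have := T_zero hsp ho hd hz => hk.
    have -> : x = 0 by rewrite /x big1 // => k _; rewrite hk scale0r.
    by rewrite mem0v.
  - by move=> [l ->]; rewrite memvZ.
have -> : z1.1 = x - \sum_k d k *: e k.
  rewrite /x; under eq_bigr do rewrite scalerDl.
  by rewrite big_split /= addrAC subrr add0r -hw.
by rewrite memvB.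
Qed.

Lemma perpW D e d w : linf D -> asym D -> ortn sp e -> \det (Emx e) != 0 ->
  \sum_k d k *: e k \in W -> (forall a, D a = Tm sp e d a) -> w \in W -> w != 0 ->
  forall q, q \in W -> G (D w) q = 0.
Proof.
move=> hD ha ho hd hvW hT hwW hw0 q hq.
set v := \sum_k d k *: e k in hvW.
have hDv : D v = 0 by rewrite hT T_self.
have hDww : G (D w) w = 0.
  have := ha w w; rewrite (G_sym hsp w (D w)) => h.
  by move: h; lra.
have hDwv : G (D w) v = 0 by rewrite ha hDv (G0r hsp) oppr0.
have [hf|hnf] := boolP (free [:: w; v]).
  have hspan : <<[:: w; v]>>%VS = W.
    apply/eqP; rewrite eqEdim; apply/andP; split.
      by apply/span_subvP => u; rewrite !inE => /orP [] /eqP ->.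
    by move: hf; rewrite /free => /eqP ->; rewrite hW.
  move: hq; rewrite -hspan => hq.
  have := coord_span (X := [tuple w; v]) hq; rewrite sum2 /= => ->.
  by rewrite (GDr hsp) !(GZr hsp) hDww hDwv !mulr0 addr0.
move: hnf; rewrite free_cons seq1_free span_seq1 negb_and !negbK => /orP [].
  move=> /vlineP [k ->]; by rewrite (linZ hD) hDv scaler0 (G0l hsp).
move=> /eqP hv0.
have hd0 : forall k, d k = 0.
  by move=> k; rewrite -(ortho_coord hsp d k ho) -/v hv0 (G0l hsp).
by rewrite hT T0 // (G0l hsp).
Qed.

Lemma lineW w e : w \in W -> w != 0 -> ortn sp e -> \det (Emx e) != 0 ->
  exists n, forall y, (forall q, q \in W -> G y q = 0) -> exists t, y = t *: n.
Proof.
move=> hwW hw0 ho hd.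
have [q hqW hqw] : exists2 q, q \in W & q \notin <[w]>%VS.
  apply/subvPn; apply/negP => hsub.
  by move: (dimvS hsub); rewrite hW dim_vline hw0.
pose p := fun k => G w (e k).
pose r := fun k => G q (e k).
exists (\sum_j (\sum_i r i * Cf p i j) *: e j).
move=> y hy.
have hyp : \sum_i G y (e i) * p i = 0 by rewrite -(G_frame _ _ ho hd) hy.
have hyr : \sum_i G y (e i) * r i = 0 by rewrite -(G_frame _ _ ho hd) hy.
case: (perp_par hyp hyr).
  move=> hc; exfalso.
  case: (@cross_ker R r p hc).
    move=> hp; move/negP: hw0; apply; apply/eqP.
    by rewrite (frame_exp hsp w ho hd) big1 // => k _; rewrite -/(p k) hp scale0r.
  move=> [l hl]; move/negP: hqw; apply; apply/vlineP; exists l.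
  rewrite (frame_exp hsp q ho hd) (frame_exp hsp w ho hd) scaler_sumr.
  by apply: eq_bigr => k _; rewrite -/(r k) hl scalerA.
move=> [l hl]; exists l.
rewrite (frame_exp hsp y ho hd) scaler_sumr; apply: eq_bigr => k _.
by rewrite hl scalerA.
Qed.

End Back.

Lemma back (R : rcfType) (sp : Mod R -> Mod R -> R * R) (o : bool) (z1 z2 z3 : Mod R) :
  is_scalar_product sp ->
  is_sliding sp z1 -> is_sliding sp z2 -> is_sliding sp z3 ->
  parallel_axes sp z1 z2 -> parallel_axes sp z1 z3 ->
  coplanar_axes sp o z1 z2 z3 -> ~~ free [:: z1; z2; z3].
Proof.
move=> hsp h1 h2 h3 p12 p13 [A0 [W [hA0 [hW hcop]]]].
have [Lt [hLt hLA]] := Lt_ex hA0.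
have hwW := wW hsp hA0 hLt hLA hcop h1.
have hw0 := sl_fst h1.
have [D1 [hD1 ha1 hD1z]] := Dz_props hsp hA0 hLA h1.
have hz1l : z1 \in [:: z1; z2; z3] by rewrite mem_head.
have [e [d [ho hd _ _]]] := getT hsp hA0 hLt hLA hcop hD1 ha1 hz1l h1 hD1z.
have [n hn] := lineW hsp hW hwW hw0 ho hd.
have key : forall z m, z \in [:: z1; z2; z3] -> is_sliding sp z -> z.1 = m *: z1.1 ->
    exists t, z = m *: ((z1.1, Lt z1.1 + t *: n) : Mod R).
  move=> z m hzl hz hzm.
  have [D [hD ha hDz]] := Dz_props hsp hA0 hLA hz.
  have [e' [d' [ho' hd' hv' hT']]] := getT hsp hA0 hLt hLA hcop hD ha hzl hz hDz.
  have [t ht] := hn (D z1.1) (perpW hsp hW hD ha ho' hd' hv' hT' hwW hw0).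
  exists t; apply: pairE => //=.
  move/eqP: hDz; rewrite eq_sym subr_eq => /eqP ->.
  by rewrite hzm (linZ hD) (linZ hLt) ht scalerDr addrC.
have [m2 [hm2 e2]] := par_mul h2 p12.
have [m3 [hm3 e3]] := par_mul h3 p13.
have [t1 ht1] := key z1 1 hz1l h1 (esym (scale1r _)).
have hz2l : z2 \in [:: z1; z2; z3] by rewrite !inE eqxx orbT.
have hz3l : z3 \in [:: z1; z2; z3] by rewrite !inE eqxx !orbT.
have [t2 ht2] := key z2 m2 hz2l h2 e2.
have [t3 ht3] := key z3 m3 hz3l h3 e3.
exact: (dep3 (oner_neq0 R) hm2 hm3 ht1 ht2 ht3).
Qed.

Section FR.
Variables (R : rcfType) (sp : Mod R -> Mod R -> R * R).
Hypothesis hsp : is_scalar_product sp.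
Local Notation G := (Gf sp).
Local Notation H := (Hf sp).

Lemma normalize x : x != 0 -> G ((Num.sqrt (G x x))^-1 *: x) ((Num.sqrt (G x x))^-1 *: x) = 1.
Proof.
move=> hx; have hg := G_gt0 hsp hx.
have hs : 0 < Num.sqrt (G x x) by rewrite sqrtr_gt0.
rewrite (GZl hsp) (GZr hsp) mulrA -expr2 exprVn sqr_sqrtr ?ltW //.
by rewrite mulVf // gt_eqF.
Qed.

Lemma nonzero_perp u1 u2 : exists2 v, v != 0 & G v u1 = 0 /\ G v u2 = 0.
Proof.
pose M := \matrix_(i < 3, j < 3)
  (if j == i0 then G (dl R i) u1 else if j == i1 then G (dl R i) u2 else 0).
have hM : \det M == 0 by rewrite det3 !mxE /=; apply/eqP; ring.
have [v hv0 hv] := det0P hM.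
have hG : forall j, (v *m M) 0 j = \sum_i v 0 i * M i j by move=> j; rewrite mxE.
have hGu : forall u, G v u = \sum_i v 0 i * G (dl R i) u.
  by move=> u; rewrite {1}(dl_sum v) (G_suml hsp).
exists v => //; split.
- have e0 : \sum_i v 0 i * M i i0 = 0 by rewrite -hG hv mxE.
  by rewrite hGu; apply: etrans e0; apply: eq_bigr => i _; rewrite mxE.
- have e0 : \sum_i v 0 i * M i i1 = 0 by rewrite -hG hv mxE.
  by rewrite hGu; apply: etrans e0; apply: eq_bigr => i _; rewrite mxE.
Qed.

Lemma unit_perp u1 u2 : exists x, [/\ G x x = 1, G x u1 = 0 & G x u2 = 0].
Proof.
have [v hv0 [h1 h2]] := nonzero_perp u1 u2.
exists ((Num.sqrt (G v v))^-1 *: v); split.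
- exact: normalize.
- by rewrite (GZl hsp) h1 mulr0.
- by rewrite (GZl hsp) h2 mulr0.
Qed.

Definition f3 (a b c : 'rV[R]_3) (i : 'I_3) : 'rV[R]_3 := [:: a; b; c]`_i.

Lemma ortn3 a b c : G a a = 1 -> G b b = 1 -> G c c = 1 -> G a b = 0 -> G a c = 0 ->
  G b c = 0 -> ortn sp (f3 a b c).
Proof.
move=> haa hbb hcc hab hac hbc.
elim/ord3P; elim/ord3P; rewrite /f3 /= ?eqxx //;
  rewrite ?(G_sym hsp b a) ?(G_sym hsp c a) ?(G_sym hsp c b) //.
Qed.

Lemma frame_ex o e0 e1 : G e0 e0 = 1 -> G e1 e1 = 1 -> G e0 e1 = 0 ->
  exists e2, pos_orthonormal sp o (f3 e0 e1 e2).
Proof.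
move=> h00 h11 h01.
have [x [hxx hx0 hx1]] := unit_perp e0 e1.
have ho : ortn sp (f3 e0 e1 x).
  by apply: ortn3 => //; rewrite G_sym.
have ho' : ortn sp (f3 e0 e1 (- x)).
  apply: ortn3 => //; rewrite ?(GNl hsp) ?(GNr hsp) ?hxx ?opprK //.
  - by rewrite (G_sym hsp) hx0 oppr0.
  - by rewrite (G_sym hsp) hx1 oppr0.
have hd := ortho_det hsp ho.
have hdet : \det (Emx (f3 e0 e1 (- x))) = - \det (Emx (f3 e0 e1 x)).
  rewrite !det3 !mxE /f3 /= ?mxE; ring.
rewrite /Emx in hdet hd.
set D := \det (\matrix_(i < 3, j < 3) f3 e0 e1 x i 0 j) in hdet hd.
case: (ltgtP D 0) => hD; last by rewrite hD eqxx in hd.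
- case: o; [exists (- x) | exists x]; split => //=; rewrite ?hdet ?oppr_gt0 //.
- case: o; [exists x | exists (- x)]; split => //=; rewrite ?hdet ?oppr_lt0 //.
Qed.

End FR.

Section FW.
Variables (R : rcfType) (sp : Mod R -> Mod R -> R * R).
Hypothesis hsp : is_scalar_product sp.
Local Notation G := (Gf sp).
Local Notation H := (Hf sp).

Lemma H_suml (c : 'I_3 -> R) v b : H (\sum_i c i *: v i) b = \sum_i c i * H (v i) b.
Proof. by rewrite !sum3 !(HDl hsp) !(HZl hsp). Qed.
Lemma H_sumr (c : 'I_3 -> R) v b : H b (\sum_i c i *: v i) = \sum_i c i * H b (v i).
Proof. by rewrite !sum3 !(HDr hsp) !(HZr hsp). Qed.

Lemma lin_frame (e m : 'I_3 -> 'rV[R]_3) : linf (fun a => \sum_i G a (e i) *: m i).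
Proof.
move=> k a b; rewrite scaler_sumr -big_split /=; apply: eq_bigr => i _.
by rewrite (G_linl hsp) scalerDl scalerA.
Qed.

Lemma yperp z z1 m : is_sliding sp z -> is_sliding sp z1 -> z.1 = m *: z1.1 -> m != 0 ->
  G (z.2 - m *: z1.2) z1.1 = 0.
Proof.
move=> hz hz1 hm m0.
have A := sl_sp2 hsp hz; have B := sl_sp2 hsp hz1.
rewrite (spE hsp) /= hm in A; rewrite (spE hsp) /= in B.
rewrite !(GZl hsp) !(GZr hsp) (HZl hsp) (HZr hsp) (G_sym hsp z1.1 z.2) in A.
rewrite (G_sym hsp z1.1 z1.2) in B.
rewrite (GBl hsp) (GZl hsp).
apply/eqP; rewrite -(mulrI_eq0 _ (lregP m0)); apply/eqP.
have -> : m * (G z.2 z1.1 - m * G z1.2 z1.1) =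
  (m * (m * H z1.1 z1.1) + m * G z.2 z1.1 + m * G z.2 z1.1) / 2
  - m * m * (H z1.1 z1.1 + G z1.2 z1.1 + G z1.2 z1.1) / 2 by field.
by rewrite A B; ring.
Qed.

Lemma fwd_setup (z1 z2 z3 : Mod R) (k1 k2 k3 : R) :
  is_sliding sp z1 -> is_sliding sp z2 -> is_sliding sp z3 ->
  parallel_axes sp z1 z2 -> parallel_axes sp z1 z3 ->
  k1 *: z1 + k2 *: z2 + k3 *: z3 = 0 -> [|| k1 != 0, k2 != 0 | k3 != 0] ->
  exists y : 'rV[R]_3, G y z1.1 = 0 /\
   forall z, z \in [:: z1; z2; z3] -> exists m s, [/\ m != 0, z.1 = m *: z1.1 &
      z.2 - m *: z1.2 = s *: y].
Proof.
move=> h1 h2 h3 p12 p13 hk hk0.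
have hw0 := sl_fst h1.
have [m2 [hm2 e2]] := par_mul h2 p12.
have [m3 [hm3 e3]] := par_mul h3 p13.
have hsum : k1 + k2 * m2 + k3 * m3 = 0.
  have := congr1 fst hk; rewrite /= e2 e3 !scalerA -!scalerDl => /eqP.
  by rewrite scaler_eq0 (negbTE hw0) orbF => /eqP.
set y2 := z2.2 - m2 *: z1.2; set y3 := z3.2 - m3 *: z1.2.
have hy : k2 *: y2 + k3 *: y3 = 0.
  have := congr1 snd hk => /= h.
  have -> : k2 *: y2 + k3 *: y3 = (k1 *: z1.2 + k2 *: z2.2 + k3 *: z3.2)
     - (k1 + k2 * m2 + k3 * m3) *: z1.2.
    by apply/rowP => j; rewrite /y2 /y3 !mxE; ring.
  by rewrite h hsum scale0r subr0.
have hy2 : G y2 z1.1 = 0 by apply: yperp.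
have hy3 : G y3 z1.1 = 0 by apply: yperp.
have [y [hyw [s2 [s3 [hs2 hs3]]]]] : exists y, G y z1.1 = 0 /\
    exists s2 s3, y2 = s2 *: y /\ y3 = s3 *: y.
  have [k20|k20] := eqVneq k2 0.
    have k30 : k3 != 0.
      apply/negP => /eqP k30; move: hk0 hsum; rewrite k20 k30 !mul0r !addr0 => hk0 hk1.
      by rewrite hk1 !eqxx in hk0.
    exists y2; split => //; exists 1, 0; split; first by rewrite scale1r.
    move: hy; rewrite k20 scale0r add0r => /eqP; rewrite scaler_eq0 (negbTE k30) /=.
    by move=> /eqP ->; rewrite ?scale0r.
  exists y3; split => //; exists (- (k3 / k2)), 1; split; last by rewrite scale1r.
  apply/rowP => j; have := congr1 (fun v : 'rV[R]_3 => v 0 j) hy; rewrite !mxE => h.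
  move: h.
  set a := (z2.2 0 j - m2 * z1.2 0 j); set b := (z3.2 0 j - m3 * z1.2 0 j) => h.
  apply: (mulfI k20); rewrite (_ : k2 * (-(k3 / k2) * b) = - (k3 * b)); last by field.
  by rewrite -[k2 * a]subr0 -h; ring.
exists y; split => // z; rewrite !inE => /orP [/eqP ->|/orP [] /eqP ->].
- by exists 1, 0; rewrite oner_eq0 !scale1r subrr scale0r.
- by exists m2, s2; split.
- by exists m3, s3; split.
Qed.

Lemma fwd_main o (z1 z2 z3 : Mod R) (y : 'rV[R]_3) :
  (forall z, z \in [:: z1; z2; z3] -> is_sliding sp z) ->
  G y z1.1 = 0 ->
  (forall z, z \in [:: z1; z2; z3] -> exists m s, [/\ m != 0, z.1 = m *: z1.1 &
      z.2 - m *: z1.2 = s *: y]) ->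
  coplanar_axes sp o z1 z2 z3.
Proof.
move=> hsl hyw hfact.
have h1 : is_sliding sp z1 by apply: hsl; rewrite mem_head.
have hw0 := sl_fst h1.
pose w := z1.1.
pose nw := Num.sqrt (G w w).
have hnw : 0 < nw by rewrite sqrtr_gt0; apply: (G_gt0 hsp).
pose e0 := nw^-1 *: w.
have h00 : G e0 e0 = 1 by apply: normalize.
have hwe : w = nw *: e0 by rewrite /e0 scalerA divff ?gt_eqF // scale1r.
have [e1 [h11 h01 [c hc]]] : exists e1, [/\ G e1 e1 = 1, G e0 e1 = 0 & exists c, y = c *: e1].
  have [->|y0] := eqVneq y 0.
    have [x [hxx hx0 _]] := unit_perp hsp e0 e0.
    by exists x; split; [|rewrite G_sym|exists 0; rewrite scale0r].
  exists ((Num.sqrt (G y y))^-1 *: y); split.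
  - exact: normalize.
  - by rewrite (GZr hsp) /e0 (GZl hsp) (G_sym hsp w y) hyw !mulr0.
  - exists (Num.sqrt (G y y)); rewrite scalerA divff ?scale1r //.
    by rewrite gt_eqF // sqrtr_gt0; apply: (G_gt0 hsp).
have [e2 hpos] := frame_ex hsp o h00 h11 h01.
pose e := f3 e0 e1 e2.
have [ho hd] := pos_ortho hpos.
have h12 : G (e i1) (e i2) = 0 by rewrite ho.
pose h := fun i j => H (e i) (e j).
pose g := fun j => G z1.2 (e j) / nw.
pose N := fun i j : 'I_3 => if i == i0 then (if j == i0 then - h i0 i0 / 2 else g j)
  else if j == i0 then - h i i0 - g i else - h i j / 2.
pose mm := fun i => \sum_j N i j *: e j.
pose L := fun a => \sum_i G a (e i) *: mm i.
have hL : linf L by apply: lin_frame.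
have hQ : forall a b, H a b + G (L a) b + G a (L b) = 0.
  move=> a b.
  pose a' := fun i => G a (e i); pose b' := fun i => G b (e i).
  have HH : H a b = \sum_i \sum_j a' i * b' j * h i j.
    rewrite {1}(frame_exp hsp a ho hd) H_suml; apply: eq_bigr => i _.
    rewrite {1}(frame_exp hsp b ho hd) H_sumr mulr_sumr; apply: eq_bigr => j _.
    by rewrite mulrA.
  have G1 : G (L a) b = \sum_i a' i * \sum_j N i j * b' j.
    rewrite /L (G_suml hsp); apply: eq_bigr => i _; congr (_ * _).
    rewrite /mm (G_suml hsp); apply: eq_bigr => j _; by rewrite (G_sym hsp).
  have G2 : G a (L b) = \sum_i b' i * \sum_j N i j * a' j.
    rewrite /L (G_sumr hsp); apply: eq_bigr => i _; congr (_ * _).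
    by rewrite /mm (G_sumr hsp).
  rewrite HH G1 G2 !sum3 /N /= /h.
  rewrite (H_sym hsp (e i1) (e i0)) (H_sym hsp (e i2) (e i0)) (H_sym hsp (e i2) (e i1)).
  by field.
have hLw : L w = z1.2.
  apply: (vec_ext hsp ho hd) => j.
  rewrite /L (G_suml hsp).
  have hwi : forall i, G w (e i) = nw * (i == i0)%:R.
    by move=> i; rewrite hwe (GZl hsp) (_ : G e0 (e i) = G (e i0) (e i)) // ho eq_sym.
  rewrite sum3 !hwi /= !mulr0 !mul0r !addr0 mulr1 /mm (G_suml hsp) sum3 !ho.
  have hsl1 := sl_sp2 hsp h1; rewrite (spE hsp) /= -/w hwe in hsl1.
  rewrite (HZl hsp) (HZr hsp) (GZl hsp) (GZr hsp) (G_sym hsp e0 z1.2) in hsl1.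
  elim/ord3P: j; rewrite /N /g /h /= ?mulr0 ?mulr1 ?addr0 ?add0r.
  - rewrite (_ : G z1.2 (f3 e0 e1 e2 i0) = G z1.2 e0) //.
    rewrite (_ : H (e i0) (e i0) = H e0 e0) //.
    have hn0 : nw != 0 by rewrite gt_eqF.
    apply: (mulfI hn0).
    have -> : nw * (nw * (- H e0 e0 / 2)) = (- (nw * (nw * H e0 e0))) / 2 by field.
    have -> : nw * G z1.2 e0 = (nw * G z1.2 e0 + nw * G z1.2 e0) / 2 by field.
    by move: hsl1; lra.
  - by rewrite mulrC divfK ?gt_eqF.
  - by rewrite mulrC divfK ?gt_eqF.
have hz1A : z1 \in Gr L by apply/memGr => //; rewrite hLw.
have hA0 : in_E sp (Gr L) by apply: GrE.
have hLe0 : L e0 = nw^-1 *: z1.2.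
  by rewrite /e0 (linZ hL) hLw.
exists (Gr L), <<[:: e0; e2]>>%VS; split => //; split.
  have hf : free [:: e0; e2].
    rewrite free_cons seq1_free span_seq1; apply/andP; split.
      apply/vlineP => [[k hk]]; move: h00; rewrite {1}hk (GZl hsp).
      have -> : G e2 e0 = G (e i2) (e i0) by [].
      by rewrite ho /= mulr0 => /eqP; rewrite eq_sym oner_eq0.
    apply/eqP => h2; have : G e2 e2 = 1 by rewrite (_ : G e2 e2 = G (e i2) (e i2)) // ho.
    by rewrite h2 (G0l hsp) => /eqP; rewrite eq_sym oner_eq0.
  by move/eqP: hf.
move=> z P hzl hax.
have hz := hsl z hzl.
have hzP := axis_mem hsp hz hax.
have hP : in_E sp P by case: hax.
have [m [s [hm0 hm1 hm2]]] := hfact z hzl.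
case: (classic (exists eB : 'I_3 -> Mod R, forall i, eB i \in P /\ proj (eB i) = e i)).
- move=> [eB hB].
  pose M := fun i j => G ((eB i).2 - L (e i)) (e j).
  have hM : forall i j, M i j = - M j i.
    move=> i j.
    case: hP => _ [hPd _].
    have := hPd _ _ (hB i).1 (hB j).1; rewrite (spE hsp) /=.
    rewrite -/(proj (eB i)) -/(proj (eB j)) (hB i).2 (hB j).2 => hij.
    have := hQ (e i) (e j).
    rewrite /M !(GBl hsp) (G_sym hsp (eB j).2 (e i)) (G_sym hsp (L (e j)) (e i)).
    move: hij; lra.
  have hMd : forall i, M i i = 0 by move=> i; have := hM i i; lra.
  pose d := fun k : 'I_3 => [:: M i1 i2; M i2 i0; M i0 i1]`_k.
  have hCf : forall i j, Cf d i j = M i j.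
    by elim/ord3P; elim/ord3P; rewrite CfE /d /= ?hMd // -hM.
  exists (\sum_k d k *: e k).
    have hM02 : M i0 i2 = 0.
      have heB : eB i0 = (m * nw)^-1 *: z.
        apply: (lift_uniq hP) => //; first by case: (hB i0).
          by rewrite memvZ.
        rewrite -/(proj (eB i0)) (hB i0).2 /= hm1 scalerA -/w.
        rewrite (_ : (m * nw)^-1 * m = nw^-1) //.
        by rewrite invfM mulrAC mulVf ?mul1r.
      rewrite /M heB /= -/e0 hLe0.
      have -> : (m * nw)^-1 *: z.2 - nw^-1 *: z1.2 = ((m * nw)^-1 * s * c) *: e1.
        rewrite -!scalerA -hc -hm2 scalerBr scalerA.
        rewrite (_ : (m * nw)^-1 * m = nw^-1) //.
        by rewrite invfM mulrAC mulVf ?mul1r.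
      rewrite (GZl hsp) (_ : G e1 e2 = G (e i1) (e i2)) // h12.
      by rewrite mulr0.
    rewrite sum3 (_ : d i1 = 0); last by rewrite /d /= hM hM02 oppr0.
    rewrite scale0r addr0; apply: memvD; apply: memvZ; apply: memv_span;
      by rewrite !inE eqxx ?orbT.
  exists e; split => //; exists d; split => //.
  move=> eA eB' hA hB' i.
  have heB' : eB' i = eB i.
    apply: (lift_uniq hP); [by case: (hB' i) | by case: (hB i) |].
    by rewrite -/(proj _) (hB' i).2 -/(proj _) (hB i).2.
  have heA : eA i = (e i, L (e i)).
    apply: (lift_uniq hA0); [by case: (hA i) | by apply/memGr |].
    by rewrite -/(proj _) (hA i).2.
  rewrite heB' heA; apply: pairE => /=; first by rewrite addr0 -/(proj _) (hB i).2.
  have -> : (\sum_j \sum_k (levi R i j k * d k) *: eA j).1 = \sum_j M i j *: e j.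
    rewrite fst_sum; apply: eq_bigr => j _.
    rewrite fst_sum /= -scaler_suml -/(proj _) (hA j).2.
    by rewrite -/(Cf d i j) hCf.
  rewrite -(frame_exp hsp _ ho hd).
  by rewrite addrC subrK.
- move=> hno.
  exists 0; first by rewrite mem0v.
  exists e; split => //; exists (fun _ => 0); split.
    by rewrite big1 // => k _; rewrite scale0r.
  by move=> eA eB _ hB; exfalso; apply: hno; exists eB.
Qed.

End FW.

Unset Implicit Arguments.
Set Strict Implicit.

Theorem proposition17 (R : rcfType) (sp : Mod R -> Mod R -> R * R) (o : bool)
    (z1 z2 z3 : Mod R) :
  is_scalar_product sp ->
  is_sliding sp z1 -> is_sliding sp z2 -> is_sliding sp z3 ->
  parallel_axes sp z1 z2 -> parallel_axes sp z2 z3 -> parallel_axes sp z1 z3 ->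
  (~~ free [:: z1; z2; z3] <-> coplanar_axes sp o z1 z2 z3).
Proof.
move=> hsp h1 h2 h3 p12 p23 p13; split; last exact: back.
move=> hnf; apply: NNPP => hnc.
move/negP: hnf; apply; apply/(@freeP _ _ 3 [tuple z1; z2; z3]) => k hk i.
apply: NNPP => hki; apply: hnc.
have hk' : k i0 *: z1 + k i1 *: z2 + k i2 *: z3 = 0 by rewrite -hk sum3.
have hk0 : [|| k i0 != 0, k i1 != 0 | k i2 != 0].
  by move: hki; elim/ord3P: i => /eqP ->; rewrite ?orbT.
have [y [hyw hfact]] := fwd_setup hsp h1 h2 h3 p12 p13 hk' hk0.
apply: (fwd_main hsp) hyw hfact.
by move=> z; rewrite !inE => /orP [/eqP ->|/orP [] /eqP ->].
Qed.
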